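(* Let $(X,*,\circ)$ be a left skew brace and $U,V\subseteq X$ sub-skew braces. The following are equivalent: (1) $[U,V]=0$, i.e. there exists a skew brace morphism $\varphi\colon U\times V\to X$ with $\varphi(u,1)=u$ and $\varphi(1,v)=v$ for all $u\in U$, $v\in V$; (2) for all $(u,v)\in U\times V$ we have $u\circ v=u*v$, and this restricted operation is commutative, i.e. $u*v=v*u$ and $u\circ v=v\circ u$; (3) for all $(u,v)\in U\times V$, $\lambda_u(v)=v$, every element of $U$ commutes with every element of $V$ in the group $(X,* )$, and every element of $U$ commutes with every element of $V$ in the group $(X,\circ)$. Consequently, an abelian object of $\mathsf{SKB}$ (a skew brace $X$ with $[X,X]=0$) is necessarily of the form $(A,+,+)$ with $(A,+)$ an abelian group.
   Context: A (left) skew brace is a triple $(A,*,\circ)$ with $(A,* )$ and $(A,\circ)$ groups such that $a\circ(b*c)=(a\circ b)*a^{-*}*(a\circ c)$ for all $a,b,c\in A$; $a^{-*}$ denotes the inverse in $(A,* )$. The two groups share the identity $1$. Morphisms are maps that are homomorphisms for both operations; products of skew braces are taken componentwise. For $a,u\in A$ put $\lambda_a(u)=a^{-*}*(a\circ u)$. $\mathsf{SKB}$ denotes the category of left skew braces. *)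

(* Defs.v *)
Record is_group {A : Type} (op : A -> A -> A) (e : A) (inv : A -> A) : Prop := {
  grp_assoc : forall a b c, op a (op b c) = op (op a b) c;
  grp_idl : forall a, op e a = a;
  grp_idr : forall a, op a e = a;
  grp_invl : forall a, op (inv a) a = e;
  grp_invr : forall a, op a (inv a) = e
}.

Record skew_brace : Type := {
  sb_car :> Type;
  sb_star : sb_car -> sb_car -> sb_car;
  sb_circ : sb_car -> sb_car -> sb_car;
  sb_one : sb_car;
  sb_invs : sb_car -> sb_car;
  sb_invc : sb_car -> sb_car;
  sb_star_group : is_group sb_star sb_one sb_invs;
  sb_circ_group : is_group sb_circ sb_one sb_invc;
  sb_compat : forall a b c,
    sb_circ a (sb_star b c) = sb_star (sb_star (sb_circ a b) (sb_invs a)) (sb_circ a c)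
}.

Arguments sb_star {_}.
Arguments sb_circ {_}.
Arguments sb_one {_}.
Arguments sb_invs {_}.
Arguments sb_invc {_}.

Definition sb_lambda {X : skew_brace} (a u : X) : X :=
  sb_star (sb_invs a) (sb_circ a u).

Record is_sub_skew_brace {X : skew_brace} (U : X -> Prop) : Prop := {
  sub_one : U sb_one;
  sub_star : forall a b, U a -> U b -> U (sb_star a b);
  sub_invs : forall a, U a -> U (sb_invs a);
  sub_circ : forall a b, U a -> U b -> U (sb_circ a b);
  sub_invc : forall a, U a -> U (sb_invc a)
}.

(* [U,V] = 0 : there is a skew brace morphism phi : U x V -> X (product with
   componentwise operations) with phi(u,1) = u and phi(1,v) = v.
   phi is represented as a curried function X -> X -> X of which only the
   values on U x V matter. *)
Definition commute_sub {X : skew_brace} (U V : X -> Prop) : Prop :=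
  exists phi : X -> X -> X,
    (forall u1 u2 v1 v2, U u1 -> U u2 -> V v1 -> V v2 ->
       phi (sb_star u1 u2) (sb_star v1 v2) = sb_star (phi u1 v1) (phi u2 v2)) /\
    (forall u1 u2 v1 v2, U u1 -> U u2 -> V v1 -> V v2 ->
       phi (sb_circ u1 u2) (sb_circ v1 v2) = sb_circ (phi u1 v1) (phi u2 v2)) /\
    (forall u, U u -> phi u sb_one = u) /\
    (forall v, V v -> phi sb_one v = v).

(* Main.v *)
Require Import Defs.
From Stdlib Require Import Setoid.

Lemma dir12 (X : skew_brace) (U V : X -> Prop) :
  commute_sub U V -> U sb_one -> V sb_one ->
  (forall u v, U u -> V v ->
           sb_circ u v = sb_star u v /\ sb_star u v = sb_star v u /\
           sb_circ u v = sb_circ v u).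
Proof.
  intros [phi [Hs [Hc [H1 H2]]]] U1 V1 u v Hu Hv.
  pose proof (sb_star_group X) as GS. pose proof (sb_circ_group X) as GC.
  assert (E1 : phi u v = sb_star u v).
  { rewrite <- (H1 u Hu) at 2. rewrite <- (H2 v Hv) at 2.
    rewrite <- Hs by auto. rewrite (grp_idr _ _ _ GS), (grp_idl _ _ _ GS). reflexivity. }
  assert (E2 : phi u v = sb_star v u).
  { rewrite <- (H1 u Hu) at 2. rewrite <- (H2 v Hv) at 2.
    rewrite <- Hs by auto. rewrite (grp_idr _ _ _ GS), (grp_idl _ _ _ GS). reflexivity. }
  assert (E3 : phi u v = sb_circ u v).
  { rewrite <- (H1 u Hu) at 2. rewrite <- (H2 v Hv) at 2.
    rewrite <- Hc by auto. rewrite (grp_idr _ _ _ GC), (grp_idl _ _ _ GC). reflexivity. }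
  assert (E4 : phi u v = sb_circ v u).
  { rewrite <- (H1 u Hu) at 2. rewrite <- (H2 v Hv) at 2.
    rewrite <- Hc by auto. rewrite (grp_idr _ _ _ GC), (grp_idl _ _ _ GC). reflexivity. }
  split; [|split]; congruence.
Qed.

Theorem proposition3p9 (X : skew_brace) :
  (forall U V : X -> Prop, is_sub_skew_brace U -> is_sub_skew_brace V ->
     (commute_sub U V <->
        (forall u v, U u -> V v ->
           sb_circ u v = sb_star u v /\ sb_star u v = sb_star v u /\
           sb_circ u v = sb_circ v u)) /\
     ((forall u v, U u -> V v ->
           sb_circ u v = sb_star u v /\ sb_star u v = sb_star v u /\
           sb_circ u v = sb_circ v u) <->
        (forall u v, U u -> V v ->
           sb_lambda u v = v /\ sb_star u v = sb_star v u /\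
           sb_circ u v = sb_circ v u))) /\
  (commute_sub (fun _ : X => True) (fun _ : X => True) ->
     (forall a b : X, sb_circ a b = sb_star a b) /\
     (forall a b : X, sb_star a b = sb_star b a)).
Proof.
  pose proof (sb_star_group X) as GS. pose proof (sb_circ_group X) as GC.
  split.
  - intros U V SU SV. split; [split|split].
    + intro H. apply dir12; auto; apply sub_one; auto.
    + intro H. exists (fun u v => sb_star u v). split; [|split; [|split]].
      * intros u1 u2 v1 v2 Hu1 Hu2 Hv1 Hv2.
        rewrite !(grp_assoc _ _ _ GS). f_equal.
        rewrite <- !(grp_assoc _ _ _ GS). f_equal.
        destruct (H u2 v1 Hu2 Hv1) as [_ [E _]]. exact E.
      * intros u1 u2 v1 v2 Hu1 Hu2 Hv1 Hv2.
        assert (Hu : U (sb_circ u1 u2)) by (apply sub_circ; auto).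
        assert (Hv : V (sb_circ v1 v2)) by (apply sub_circ; auto).
        destruct (H _ _ Hu Hv) as [E _]. rewrite <- E.
        destruct (H _ _ Hu1 Hv1) as [E1 _]. rewrite <- E1.
        destruct (H _ _ Hu2 Hv2) as [E2 _]. rewrite <- E2.
        destruct (H _ _ Hu2 Hv1) as [_ [_ E3]].
        rewrite <- !(grp_assoc _ _ _ GC). f_equal.
        rewrite !(grp_assoc _ _ _ GC). f_equal. exact E3.
      * intros u _. apply (grp_idr _ _ _ GS).
      * intros v _. apply (grp_idl _ _ _ GS).
    + intros H u v Hu Hv. destruct (H u v Hu Hv) as [E [E1 E2]].
      split; [|split; assumption]. unfold sb_lambda. rewrite E.
      rewrite (grp_assoc _ _ _ GS), (grp_invl _ _ _ GS), (grp_idl _ _ _ GS). reflexivity.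
    + intros H u v Hu Hv. destruct (H u v Hu Hv) as [E [E1 E2]].
      split; [|split; assumption]. unfold sb_lambda in E. rewrite <- E at 2.
      rewrite (grp_assoc _ _ _ GS), (grp_invr _ _ _ GS), (grp_idl _ _ _ GS). reflexivity.
  - intro H. pose proof (dir12 X _ _ H I I) as D. split; intros a b; apply (D a b I I).
Qed.
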